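(* For $0<\delta<1$ and $\mu\in(0,1)$ let $\Gamma_{1-\delta}(\mu)=\Pr[x\le t,\ y\le t]$, where $(x,y)$ are jointly Gaussian standard normal variables with covariance $1-\delta$ and $t$ is defined by $\Pr[x\le t]=\mu$. For every constant $0<c<1$ there exist constants $C>0$ and $\delta_0>0$ such that for all $\delta\in(0,\delta_0)$ and all $\mu$ with $\delta^c\le\mu\le1-\delta^c$, we have $\mu-\Gamma_{1-\delta}(\mu)\ge C\,\delta^{\frac12+2c}$. *)

(* Defs.v *)
From HB Require Import structures.
From mathcomp Require Import all_boot all_order all_algebra.
From mathcomp Require Import all_classical all_reals all_analysis.
Set Implicit Arguments. Unset Strict Implicit. Unset Printing Implicit Defensive.
Import Order.TTheory GRing.Theory Num.Theory.
Local Open Scope classical_set_scope.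
Local Open Scope ring_scope.

Definition std_normal_cdf {R : realType} (t : R) : \bar R :=
  normal_prob 0 1 `]-oo, t].

Definition bvn_pdf {R : realType} (rho : R) (p : R * R) : R :=
  (2 * pi * Num.sqrt (1 - rho ^+ 2))^-1 *
  expR (- (p.1 ^+ 2 - 2 * rho * p.1 * p.2 + p.2 ^+ 2) / (2 * (1 - rho ^+ 2))).

Definition bvn_orthant {R : realType} (rho t : R) : \bar R :=
  (\int[(@lebesgue_measure R) \x (@lebesgue_measure R)]_(p in [set p : R * R | (p.1 <= t)%R /\ (p.2 <= t)%R])
     (bvn_pdf rho p)%:E)%E.

(* Main.v *)
Require Import Defs.
From HB Require Import structures.
From mathcomp Require Import all_boot all_order all_algebra.
From mathcomp Require Import all_classical all_reals all_analysis.
From mathcomp Require Import ring lra measurable_realfun.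
Import Order.TTheory GRing.Theory Num.Theory.
Local Open Scope ring_scope.

Section helpers.
Local Open Scope classical_set_scope.

Lemma bvn_factor (R : realType) (rho x y : R) : 0 < 1 - rho ^+ 2 ->
  bvn_pdf rho (x, y) = normal_pdf 0 1 x * normal_pdf (rho * x) (Num.sqrt (1 - rho ^+ 2)) y.
Proof.
move=> hv.
have s0 : Num.sqrt (1 - rho ^+ 2) != 0 by rewrite gt_eqF // sqrtr_gt0.
rewrite !normal_pdfE ?oner_neq0 //.
rewrite /bvn_pdf /normal_fun /normal_peak /=.
rewrite sqr_sqrtr ?ltW // expr1n mul1r.
rewrite mulrACA -invfM -sqrtrM; last by rewrite mulrn_wge0 // pi_ge0.
rewrite -expRD.
congr (_ * expR _).
  congr (_^-1).
  have E : pi *+ 2 * ((1 - rho ^+ 2) * pi *+ 2) = (2 * pi * Num.sqrt (1 - rho ^+ 2)) ^+ 2.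
    rewrite exprMn sqr_sqrtr ?ltW //; ring.
  rewrite E sqrtr_sqr ger0_norm //.
  by rewrite mulr_ge0 ?sqrtr_ge0 // mulr_ge0 ?pi_ge0.
have hv0 : 1 - rho ^+ 2 != 0 by rewrite gt_eqF.
field. by rewrite hv0.
Qed.

Lemma mbvn (R : realType) (rho : R) : measurable_fun setT (@bvn_pdf R rho).
Proof.
rewrite /bvn_pdf.
apply: measurable_funM => //.
apply: measurableT_comp => //.
apply: measurable_funM => //.
apply: measurableT_comp => //.
apply: measurable_funD => //.
  apply: measurable_funB => //.
    exact: (measurable_funX 2 (@measurable_fst _ _ R R)).
  apply: measurable_funM => //.
  by apply: measurable_funM => //.
exact: (measurable_funX 2 (@measurable_snd _ _ R R)).
Qed.

Lemma tail_gen (R : realType) (A : set R) (t : R) : measurable A ->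
  (forall x, A x -> t ^+ 2 + (x - t) ^+ 2 <= x ^+ 2) ->
  (normal_prob 0 1 A <= (expR (- t ^+ 2 / 2))%:E)%E.
Proof.
move=> mA hA; rewrite /normal_prob.
apply: (@le_trans _ _ (\int[lebesgue_measure]_(x in A) ((expR (- t ^+ 2 / 2))%:E * (normal_pdf t 1 x)%:E))%E).
  apply: ge0_le_integral => //.
  - by move=> x _; rewrite lee_fin normal_pdf_ge0.
  - apply/measurable_EFinP; apply: measurable_funTS; exact: measurable_normal_pdf.
  - apply/measurable_EFinP; apply: measurable_funTS.
    apply: measurable_funM => //; exact: measurable_normal_pdf.
  move=> x Ax; rewrite -EFinM lee_fin !normal_pdfE ?oner_neq0 //.
  rewrite mulrCA ler_pM2l ?normal_peak_gt0 ?oner_neq0 // /normal_fun -expRD ler_expR.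
  have := hA x Ax; rewrite expr1n subr0; lra.
rewrite ge0_integralZl_EFin ?expR_ge0 //; first last.
  all: try by move=> x _; rewrite lee_fin normal_pdf_ge0.
  all: try by apply/measurable_EFinP; apply: measurable_funTS; exact: measurable_normal_pdf.
rewrite -[X in (_ <= X)%E]mule1 lee_pmul2l ?lte_fin ?expR_gt0 //.
rewrite -(integral_normal_pdf t 1).
apply: ge0_subset_integral => //.
- apply/measurable_EFinP; exact: measurable_normal_pdf.
- by move=> x _; rewrite lee_fin normal_pdf_ge0.
Qed.


Lemma tail_both (R : realType) (t mu a : R) : std_normal_cdf t = mu%:E ->
  a <= mu -> mu <= 1 - a -> a <= expR (- t ^+ 2 / 2).
Proof.
move=> ht ha hb; rewrite /std_normal_cdf in ht.
have [t0|t0] := leP t 0.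
  rewrite -lee_fin; apply: (@le_trans _ _ (normal_prob 0 1 `]-oo, t])).
    by rewrite ht lee_fin.
  apply: tail_gen; first exact: measurable_itv.
  move=> x /=; rewrite in_itv /= => xt.
  nra.
have hU : (normal_prob 0 1 `]-oo, t] + normal_prob 0 1 `]t, +oo[ = 1)%E.
  rewrite -measureU //=; last first.
    apply/seteqP; split => // x /=; rewrite !in_itv /= => -[] /[swap]; rewrite andbT => h1 h2.
    by have := lt_le_trans h1 h2; rewrite ltxx.
  rewrite (_ : _ `|` _ = setT); first by rewrite /normal_prob integral_normal_pdf.
  apply/seteqP; split => // x _ /=; rewrite !in_itv /= andbT.
  by case: (leP x t) => _; [left|right].
have : (normal_prob 0 1 `]t, +oo[ = (1 - mu)%:E)%E.
  move: hU; rewrite ht.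
  have := measure_ge0 (normal_prob 0 1) `]t, +oo[.
  case: (normal_prob 0 1 `]t, +oo[) => [p||] //= _.
  by rewrite -EFinD => -[] <-; congr (_%:E); ring.
move=> h1.
rewrite -lee_fin; apply: (@le_trans _ _ (normal_prob 0 1 `]t, +oo[)).
  by rewrite h1 lee_fin; lra.
apply: tail_gen; first exact: measurable_itv.
move=> x /=; rewrite in_itv /= andbT => xt.
nra.
Qed.

Lemma bvn_ge0 (R : realType) (rho : R) p : 0 < 1 - rho ^+ 2 -> 0 <= bvn_pdf rho p.
Proof.
move=> hv; case: p => x y; rewrite bvn_factor //.
by rewrite mulr_ge0 // normal_pdf_ge0.
Qed.

Lemma marg (R : realType) (rho t : R) (B : set (R * R)) : 0 < 1 - rho ^+ 2 ->
  measurable B -> B `<=` `]-oo, t] `*` setT ->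
  (\int[(@lebesgue_measure R) \x (@lebesgue_measure R)]_(p in B) (bvn_pdf rho p)%:E
    <= std_normal_cdf t)%E.
Proof.
move=> hv mB hB.
set D1 := `]-oo, t] `*` [set: R].
have mD1 : measurable D1 by apply: measurableX => //; exact: measurable_itv.
have mf : measurable_fun setT (fun p => (@bvn_pdf R rho p)%:E).
  by apply/measurable_EFinP; exact: mbvn.
apply: (@le_trans _ _ (\int[(@lebesgue_measure R) \x (@lebesgue_measure R)]_(p in D1) (bvn_pdf rho p)%:E)%E).
  apply: ge0_subset_integral => //.
  - exact: measurable_funTS.
  - by move=> p _; rewrite lee_fin bvn_ge0.
rewrite integral_mkcond fubini_tonelli1 /=; last 2 first.
  - by apply/(measurable_restrictT _ _).1 => //; exact: measurable_funTS.
  - by move=> p; apply: erestrict_ge0 => q _; rewrite lee_fin bvn_ge0.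
rewrite /std_normal_cdf /normal_prob [in X in (_ <= X)%E]integral_mkcond /fubini_F.
rewrite le_eqVlt; apply/orP; left; apply/eqP.
rewrite integral_mkcond; apply: eq_integral => x _.
rewrite !patchE in_setT /=; case: ifP => hx.
  under eq_integral do rewrite patchE in_setX /= hx in_setT /= bvn_factor // EFinM.
  rewrite ge0_integralZl_EFin ?integral_normal_pdf ?mule1 ?normal_pdf_ge0 //.
    by move=> y _; rewrite lee_fin normal_pdf_ge0.
  by apply/measurable_EFinP; exact: measurable_normal_pdf.
under eq_integral do rewrite patchE in_setX /= hx /=.
by rewrite integral0.
Qed.

Lemma pt_bound (R : realType) (d t x y : R) : 0 < d -> d <= 1/256 ->
  d * t ^+ 2 <= 1/4 ->
  t - Num.sqrt d <= x -> x <= t -> t < y -> y <= t + Num.sqrt d ->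
  (4 * pi * Num.sqrt d)^-1 * expR (- t ^+ 2 - 11/2) <= bvn_pdf (1 - d) (x, y).
Proof.
move=> d0 d1 dt hx1 hx2 hy1 hy2.
set r := Num.sqrt d.
move: hx1 hy2; rewrite -/r => hx1 hy2.
have r0 : 0 < r by rewrite sqrtr_gt0.
have rr : r ^+ 2 = d by rewrite sqr_sqrtr // ltW.
set v := 1 - (1 - d) ^+ 2.
have hv : v = 2 * d - d ^+ 2 by rewrite /v; ring.
have v0 : d <= v by rewrite hv; nra.
have v4 : v <= 4 * d by rewrite hv; nra.
rewrite /bvn_pdf /=.
apply: ler_pM.
- by rewrite invr_ge0 mulr_ge0 // ?sqrtr_ge0 // mulr_ge0 // pi_ge0.
- exact: expR_ge0.
- rewrite lef_pV2 ?posrE; last 2 first.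
  + by rewrite mulr_gt0 // mulr_gt0 // pi_gt0.
  + by rewrite mulr_gt0 ?sqrtr_gt0 ?mulr_gt0 ?pi_gt0 //; lra.
  have : Num.sqrt v <= 2 * r.
    have -> : 2 * r = Num.sqrt (2 ^+ 2 * d).
      by rewrite sqrtrM ?sqrtr_sqr ?ger0_norm // exprn_ge0.
    rewrite ler_sqrt; last by rewrite mulr_ge0 ?exprn_ge0 //; lra.
    lra.
  move=> h; rewrite -/v; have := pi_gt0 R; nra.
rewrite ler_expR.
have xx : x ^+ 2 <= 2 * t ^+ 2 + 2.
  have : (x - t) ^+ 2 <= d.
    rewrite -rr; have h1 : 0 <= t - x by lra.
    have h2 : t - x <= r by lra.
    have -> : (x - t) ^+ 2 = (t - x) * (t - x) by ring.
    rewrite expr2; apply: ler_pM => //.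
  nra.
have ww : (d * x) ^+ 2 <= d.
  have d2 : d ^+ 2 <= 1/2 by nra.
  have : (x - t) ^+ 2 <= d.
    rewrite -rr; have h1 : 0 <= t - x by lra.
    have h2 : t - x <= r by lra.
    have -> : (x - t) ^+ 2 = (t - x) * (t - x) by ring.
    rewrite expr2; apply: ler_pM => //.
  nra.
have w1 : -r <= d * x <= r.
  apply/andP; split; nra.
have yy : (y - (1 - d) * x) ^+ 2 <= 9 * d.
  have -> : y - (1 - d) * x = (y - x) + d * x by ring.
  rewrite -[X in _ <= 9 * X]rr.
  case/andP: w1 => w1 w2.
  have hz1 : 0 <= 3 * r - ((y - x) + d * x) by lra.
  have hz2 : 0 <= 3 * r + ((y - x) + d * x) by lra.
  have := mulr_ge0 hz1 hz2; nra.
have vne : v != 0 by rewrite gt_eqF //; lra.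
have -> : - (x ^+ 2 - 2 * (1 - d) * x * y + y ^+ 2) / (2 * v)
  = - (x ^+ 2 / 2) - (y - (1 - d) * x) ^+ 2 / (2 * v).
  rewrite /v; field; rewrite -/v; exact: vne.
have : (y - (1 - d) * x) ^+ 2 / (2 * v) <= 9 / 2.
  rewrite ler_pdivrMr; last lra.
  nra.
lra.
Qed.

Lemma rect_meas (R : realType) (t r : R) : 0 < r ->
  (((@lebesgue_measure R) \x (@lebesgue_measure R)) (`[(t - r)%R, t] `*` `]t, (t + r)%R]) = (r * r)%:E)%E.
Proof.
move=> r0.
rewrite product_measure1E; try exact: measurable_itv.
have h1 : (@lebesgue_measure R `[(t - r)%R, t] = r%:E)%E.
  rewrite lebesgue_measure_itv /= lte_fin ifT; last lra.
  by rewrite -EFinD; congr (_%:E); ring.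
have h2 : (@lebesgue_measure R `]t, (t + r)%R] = r%:E)%E.
  rewrite lebesgue_measure_itv /= lte_fin ifT; last lra.
  by rewrite -EFinD; congr (_%:E); ring.
move: h1 h2 => /= h1 h2.
by rewrite h1 h2.
Qed.

Lemma fin_aux (R : realType) (G I : \bar R) (m X Y : R) : (0 <= G)%E -> (0 <= I)%E ->
  (G + I <= m%:E)%E -> (X%:E <= I)%E -> Y <= X -> (Y%:E <= m%:E - G)%E.
Proof.
move: G I => [g||] [i||] //= hg hi h1 h2 h3.
rewrite -EFinD lee_fin in h1; rewrite lee_fin in h2.
by rewrite -EFinB lee_fin; lra.
Qed.
End helpers.

Theorem lemma10 (R : realType) (c : R) (hc0 : 0 < c) (hc1 : c < 1) :
  exists C : R, exists delta0 : R, 0 < C /\ 0 < delta0 /\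
    forall delta mu t : R,
      0 < delta -> delta < 1 -> delta < delta0 ->
      delta `^ c <= mu -> mu <= 1 - delta `^ c ->
      std_normal_cdf t = mu%:E ->
      ((C * delta `^ (2^-1 + 2 * c))%:E <= mu%:E - bvn_orthant (1 - delta) t)%E.
Proof.
have pi0 := pi_gt0 R.
exists ((4 * pi)^-1 * expR (- (11 / 2))), (1 / 256).
split; first by rewrite mulr_gt0 ?expR_gt0 // invr_gt0 mulr_gt0.
split; first lra.
move=> d mu t d0 d1 dd hmu1 hmu2 ht.
have dle : d <= 1 / 256 by lra.
set a := d `^ c.
have a0 : 0 < a by rewrite powR_gt0.
have ha : a <= expR (- t ^+ 2 / 2) := @tail_both R t mu a ht hmu1 hmu2.
have da : d <= a.
  rewrite /a -{1}(powRr1 (ltW d0)); apply: ger_powR; last lra.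
  by apply/andP; split; lra.
have dt : d * t ^+ 2 <= 1 / 4.
  rewrite leNgt; apply/negP => h.
  set w := t ^+ 2 / 4.
  have w16 : 16 <= w by rewrite /w; nra.
  have dw : 1 < 16 * d * w by rewrite /w; lra.
  have ew := expR_ge1Dx w.
  have ew0 := expR_gt0 w.
  have E1 : expR (t ^+ 2 / 2) = expR w * expR w.
    by rewrite -expRD /w; congr expR; field.
  have E2 : expR (- t ^+ 2 / 2) * expR (t ^+ 2 / 2) = 1.
    by rewrite -expRD (_ : _ + _ = 0) ?expR0 //; ring.
  have hq : 1 < d * expR (t ^+ 2 / 2).
    rewrite E1.
    have : w * w <= expR w * expR w by apply: ler_pM; lra.
    nra.
  have hp := expR_gt0 (- t ^+ 2 / 2).
  have hq0 := expR_gt0 (t ^+ 2 / 2).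
  nra.
have ee : d `^ (2 * c) <= expR (- t ^+ 2).
  rewrite mulrC powRrM powR_mulrn ?powR_ge0 //.
  rewrite (_ : - t ^+ 2 = 2%:R * (- t ^+ 2 / 2)); last by field.
  rewrite expRM_natl !expr2; apply: ler_pM => //; exact: ltW.
have hv : 0 < 1 - (1 - d) ^+ 2 by nra.
set r := Num.sqrt d.
have r0 : 0 < r by rewrite sqrtr_gt0.
have rE : d `^ (2^-1 + 2 * c) = r * d `^ (2 * c).
  rewrite powRD; last by apply/implyP => _; rewrite gt_eqF.
  by rewrite powR12_sqrt // ltW.
rewrite rE.
set D2 := [set p : R * R | (p.1 <= t)%R /\ (p.2 <= t)%R]%classic.
have D2E : D2 = (`]-oo, t] `*` `]-oo, t])%classic.
  by apply/seteqP; split => -[x y] /=; rewrite !in_itv /=.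
set Rc := (`[(t - r)%R, t] `*` `]t, (t + r)%R])%classic.
have mD2 : measurable D2.
  by rewrite D2E; apply: measurableX; exact: measurable_itv.
have mRc : measurable Rc.
  by apply: measurableX; exact: measurable_itv.
set f := fun p : R * R => (bvn_pdf (1 - d) p)%:E.
have mf : measurable_fun setT f.
  by apply/measurable_EFinP; exact: mbvn.
have f0 : forall p, (0 <= f p)%E by move=> p; rewrite lee_fin bvn_ge0.
have disj : [disjoint D2 & Rc]%classic.
  rewrite disj_set2E; apply/eqP/seteqP; split => // -[x y] /= [[_ h2] [_ h3]].
  have h4 : y \in `]t, (t + r)%R] := h3.
  by move: h4; rewrite in_itv /= => /andP[h4 _]; move: h2 => /= h2; lra.
have hU : (\int[(@lebesgue_measure R) \x (@lebesgue_measure R)]_(p in (D2 `|` Rc)%classic) f p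
    <= std_normal_cdf t)%E.
  apply: marg => //; first exact: measurableU.
  move=> [x y] /= hxy.
  have hx : x <= t.
    case: hxy => [[h1 _]|[h1 _]] //.
    have h1' : x \in `[(t - r)%R, t] := h1.
    by move: h1'; rewrite in_itv /= => /andP[_ ->].
  split => //; change (x \in `]-oo, t]); by rewrite in_itv /= hx.
rewrite ge0_integral_setU // in hU; last exact: measurable_funTS.
have hR : ((((4 * pi * r)^-1 * expR (- t ^+ 2 - 11/2)) * (r * r))%:E
    <= \int[(@lebesgue_measure R) \x (@lebesgue_measure R)]_(p in Rc) f p)%E.
  rewrite EFinM -(@rect_meas R t r) // -integral_cst //.
  apply: ge0_le_integral => //; first last.
  all: try by move=> p _; rewrite lee_fin mulr_ge0 ?expR_ge0 // invr_ge0 mulr_ge0 ?sqrtr_ge0 // mulr_ge0 // ltW.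
  all: try exact: measurable_funTS.
  all: try exact: measurable_cst.
  move=> [x y] /= [hx hy]; rewrite lee_fin.
  move: hx hy; rewrite !in_itv /= => /andP[hx1 hx2] /andP[hy1 hy2].
  exact: pt_bound.
rewrite ht in hU.
apply: (@fin_aux R (bvn_orthant (1 - d) t) _ mu _ _ _ _ hU hR).
- by apply: integral_ge0 => p _; exact: f0.
- by apply: integral_ge0 => p _; exact: f0.
  have -> : (4 * pi * r)^-1 * expR (- t ^+ 2 - 11 / 2) * (r * r)
     = (4 * pi)^-1 * expR (- (11 / 2)) * (r * expR (- t ^+ 2)).
    rewrite expRD; move: pi0; generalize (pi : R) => p p0.
    field; by rewrite (lt0r_neq0 p0) (lt0r_neq0 r0).
  rewrite ler_pM2l; last by rewrite mulr_gt0 ?expR_gt0 // invr_gt0 mulr_gt0.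
  by rewrite ler_pM2l.
Qed.
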